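(* Let $\mathcal{M},\mathcal{L}\in\mathbb{C}^{2n\times2n}$ be such that $(\mathcal{M},\mathcal{L})$ is a regular symplectic pair with $\mathrm{ind}_\infty(\mathcal{M},\mathcal{L})\le 1$. Then there is an integer $\hat n\le n$ with $\mathrm{rank}(\mathcal{M})=\mathrm{rank}(\mathcal{L})=n+\hat n$. Moreover, with $\ell=n-\hat n$, there exist $U_0,U_\infty\in\mathbb{C}^{2n\times\ell}$, $U_1\in\mathbb{C}^{2n\times 2\hat n}$ and a symplectic matrix $\widehat{\mathcal{S}}\in\mathbb{C}^{2\hat n\times2\hat n}$ such that, with $\mathbf{U}=[U_1\,|\,U_0,U_\infty]\in\mathbb{C}^{2n\times 2n}$, $$\mathbf{U}^H\mathcal{J}_n\mathbf{U}=\begin{bmatrix}\mathcal{J}_{\hat n}&0\\0&\mathcal{J}_\ell\end{bmatrix}$$ and $$\mathcal{M}U_0=0,\qquad \mathcal{L}U_\infty=0,\qquad \mathcal{M}U_1=\mathcal{L}U_1\widehat{\mathcal{S}}.$$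
   Context: $\mathcal{J}_m=\begin{bmatrix}0&I_m\\-I_m&0\end{bmatrix}$ (absent if $m=0$). A matrix $\mathcal{S}\in\mathbb{C}^{2m\times2m}$ is symplectic if $\mathcal{S}\mathcal{J}_m\mathcal{S}^H=\mathcal{J}_m$. A pair $(\mathcal{M},\mathcal{L})$ of $2n\times2n$ matrices is symplectic if $\mathcal{M}\mathcal{J}_n\mathcal{M}^H=\mathcal{L}\mathcal{J}_n\mathcal{L}^H$, and regular if $\det(\mathcal{M}-\lambda\mathcal{L})\ne0$ for some $\lambda\in\mathbb{C}$. For a regular pair $(A,B)$ there are invertible $P,Q$ with $PAQ=\mathrm{diag}(J,I)$, $PBQ=\mathrm{diag}(I,N)$ where $J$ is a Jordan matrix and $N$ is nilpotent (Kronecker canonical form); $\mathrm{ind}_\infty(A,B)$ is the nilpotency index of $N$ (the least $\nu$ with $N^\nu=0$), and by convention $\mathrm{ind}_\infty(A,B)=0$ if $B$ is invertible. *)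

(* Defs.v *)
(* The complex field is modelled as R[i] = complex R for an
   arbitrary R : realType (every realType is (isomorphic to) the reals). *)
From HB Require Import structures.
From mathcomp Require Import all_boot all_order all_algebra.
From mathcomp Require Import complex.
From mathcomp Require Import reals.
Set Implicit Arguments. Unset Strict Implicit. Unset Printing Implicit Defensive.
Import Order.TTheory GRing.Theory Num.Theory.
Local Open Scope ring_scope.

Definition ctrmx (F : numClosedFieldType) m n (A : 'M[F]_(m, n)) : 'M[F]_(n, m) :=
  (map_mx Num.conj A)^T.

Definition Jmx (F : numClosedFieldType) (m : nat) : 'M[F]_(m + m) :=
  block_mx 0 1%:M (- 1%:M) 0.

Definition symplectic (F : numClosedFieldType) m (S : 'M[F]_(m + m)) : Prop :=
  S *m Jmx F m *m ctrmx S = Jmx F m.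

Definition symplectic_pair (F : numClosedFieldType) n (M L : 'M[F]_(n + n)) : Prop :=
  M *m Jmx F n *m ctrmx M = L *m Jmx F n *m ctrmx L.

Definition regular_pair (F : numClosedFieldType) k (A B : 'M[F]_k) : Prop :=
  exists lambda : F, \det (A - lambda *: B) != 0.

Definition jordan_mx (F : fieldType) k (J : 'M[F]_k) : Prop :=
  forall i j : 'I_k,
    (i != j -> j != i.+1 :> nat -> J i j = 0) /\
    (j = i.+1 :> nat -> (J i j = 0 \/ (J i j = 1 /\ J i i = J j j))).

Definition kcf (F : fieldType) (N : nat) (A B : 'M[F]_N)
  (k m : nat) (e : k + m = N) (J : 'M[F]_k) (Nil : 'M[F]_m) : Prop :=
  jordan_mx J /\ (exists p, Nil ^+ p = 0) /\
  exists P Q : 'M[F]_N, P \in unitmx /\ Q \in unitmx /\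
    P *m A *m Q = castmx (e, e) (block_mx J 0 0 1%:M) /\
    P *m B *m Q = castmx (e, e) (block_mx 1%:M 0 0 Nil).

(* ind_oo(A,B) <= nu : the nilpotent part of the Kronecker canonical form
   has nilpotency index <= nu (index 0 iff the nilpotent block is empty,
   i.e. B invertible). The index is an invariant of the pencil. *)
Definition ind_inf_le (F : fieldType) (N : nat) (A B : 'M[F]_N) (nu : nat) : Prop :=
  exists k m (e : k + m = N) (J : 'M[F]_k) (Nil : 'M[F]_m),
    kcf A B e J Nil /\ Nil ^+ nu = 0.

(* Main.v *)
Require Import Defs.
From HB Require Import structures.
From mathcomp Require Import all_boot all_order all_algebra.
From mathcomp Require Import complex.
From mathcomp Require Import reals.
From mathcomp Require Import zify ring.
Set Implicit Arguments. Unset Strict Implicit. Unset Printing Implicit Defensive.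
Import Order.TTheory GRing.Theory Num.Theory.
Local Open Scope ring_scope.

Section CT.
Variable F : numClosedFieldType.
Implicit Types m n p : nat.

Lemma ctrmx_mul m n p (A : 'M[F]_(m,n)) (B : 'M[F]_(n,p)) :
  ctrmx (A *m B) = ctrmx B *m ctrmx A.
Proof. by rewrite /ctrmx map_mxM trmx_mul. Qed.

Lemma ctrmxK m n (A : 'M[F]_(m,n)) : ctrmx (ctrmx A) = A.
Proof. by apply/matrixP=> i j; rewrite !mxE conjCK. Qed.

Lemma ctrmxD m n (A B : 'M[F]_(m,n)) : ctrmx (A + B) = ctrmx A + ctrmx B.
Proof. by apply/matrixP=> i j; rewrite !mxE rmorphD. Qed.

Lemma ctrmxN m n (A : 'M[F]_(m,n)) : ctrmx (- A) = - ctrmx A.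
Proof. by apply/matrixP=> i j; rewrite !mxE rmorphN. Qed.

Lemma ctrmxB m n (A B : 'M[F]_(m,n)) : ctrmx (A - B) = ctrmx A - ctrmx B.
Proof. by rewrite ctrmxD ctrmxN. Qed.

Lemma ctrmx0 m n : ctrmx (0 : 'M[F]_(m,n)) = 0.
Proof. by apply/matrixP=> i j; rewrite !mxE rmorph0. Qed.

Lemma ctrmx1 n : ctrmx (1%:M : 'M[F]_n) = 1%:M.
Proof. by apply/matrixP=> i j; rewrite !mxE eq_sym; case: eqP; rewrite ?rmorph1 ?rmorph0. Qed.

Lemma ctrmxZ m n (a : F) (A : 'M[F]_(m,n)) : ctrmx (a *: A) = a^* *: ctrmx A.
Proof. by apply/matrixP=> i j; rewrite !mxE rmorphM. Qed.

Lemma ctrmx_row m n1 n2 (A : 'M[F]_(m,n1)) (B : 'M[F]_(m,n2)) :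
  ctrmx (row_mx A B) = col_mx (ctrmx A) (ctrmx B).
Proof. by rewrite /ctrmx map_row_mx tr_row_mx. Qed.

Lemma ctrmx_col m1 m2 n (A : 'M[F]_(m1,n)) (B : 'M[F]_(m2,n)) :
  ctrmx (col_mx A B) = row_mx (ctrmx A) (ctrmx B).
Proof. by rewrite /ctrmx map_col_mx tr_col_mx. Qed.

Lemma ctrmx_block m1 m2 n1 n2 (a : 'M[F]_(m1,n1)) (b : 'M[F]_(m1,n2))
  (c : 'M[F]_(m2,n1)) (d : 'M[F]_(m2,n2)) :
  ctrmx (block_mx a b c d) = block_mx (ctrmx a) (ctrmx c) (ctrmx b) (ctrmx d).
Proof. by rewrite /ctrmx map_block_mx tr_block_mx. Qed.

Lemma mxrank_ctrmx m n (A : 'M[F]_(m,n)) : \rank (ctrmx A) = \rank A.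
Proof. by rewrite /ctrmx mxrank_tr mxrank_map. Qed.

Lemma ctrmx_unit n (A : 'M[F]_n) : A \in unitmx -> ctrmx A \in unitmx.
Proof.
move=> uA; have := mulmxV uA; move/(congr1 (@ctrmx F n n)).
by rewrite ctrmx_mul ctrmx1 => /mulmx1_unit [].
Qed.

Lemma ctrmx_inv n (A : 'M[F]_n) : A \in unitmx -> ctrmx (invmx A) = invmx (ctrmx A).
Proof.
move=> uA; have uA' := ctrmx_unit uA.
rewrite -[LHS]mul1mx -(mulVmx uA') -mulmxA -ctrmx_mul mulVmx // ctrmx1 mulmx1 //.

Qed.

Lemma Jmx_ct m : ctrmx (Jmx F m) = - Jmx F m.
Proof.
rewrite /Jmx ctrmx_block !ctrmx0 ctrmxN ctrmx1.
by rewrite -[RHS]scaleN1r scale_block_mx !scaleN1r oppr0 opprK.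
Qed.

Lemma Jmx_sq m : Jmx F m *m Jmx F m = -1%:M.
Proof.
rewrite /Jmx mulmx_block !mulmx0 !mul0mx !mul1mx !mulmx1 !add0r !addr0.
by rewrite -[RHS]scaleN1r (scalar_mx_block m m 1) scale_block_mx !scaleN1r oppr0.
Qed.
End CT.

Section Aux.
Variable F : numClosedFieldType.

Lemma rank_row_mx0 r s t (X : 'M[F]_(r,s)) : \rank (row_mx X (0 : 'M_(r,t))) = \rank X.
Proof.
apply/eqP; rewrite eqn_leq; apply/andP; split.
  have -> : row_mx X (0 : 'M_(r,t)) = X *m row_mx 1%:M 0 by rewrite mul_mx_row mulmx1 mulmx0.
  exact (mxrankM_maxl _ _).
have h : row_mx X 0 *m col_mx 1%:M (0 : 'M_(t,s)) = X.
  by rewrite mul_row_col mulmx1 mulmx0 addr0.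
by rewrite -{1}h mxrankM_maxl.
Qed.

Lemma rank_row0_1 r s : \rank (row_mx (0 : 'M[F]_(r,s)) (1%:M : 'M_r)) = r.
Proof.
apply/eqP; rewrite eqn_leq rank_leq_row /=.
have h : row_mx (0 : 'M[F]_(r,s)) (1%:M : 'M_r) *m col_mx 0 1%:M = 1%:M.
  by rewrite mul_row_col mul0mx add0r mulmx1.
by apply: (leq_trans _ (mxrankM_maxl _ (col_mx 0 1%:M))); rewrite h mxrank1.
Qed.

Lemma rank_col_1_0 r s : \rank (col_mx (1%:M : 'M[F]_r) (0 : 'M_(s,r))) = r.
Proof.
apply/eqP; rewrite eqn_leq rank_leq_col /=.
have h : row_mx (1%:M : 'M[F]_r) (0 : 'M_(r,s)) *m col_mx 1%:M 0 = 1%:M.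
  by rewrite mul_row_col mul0mx addr0 mulmx1.
by apply: (leq_trans _ (mxrankM_maxr (row_mx 1%:M (0 : 'M_(r,s))) _)); rewrite h mxrank1.
Qed.

Lemma mxrankN' r s (X : 'M[F]_(r,s)) : \rank (- X) = \rank X.
Proof.
have -> : - X = X *m (- 1%:M) by rewrite mulmxN mulmx1.
rewrite mxrankMfree // row_free_unit.
have h : (- 1%:M : 'M[F]_s) *m (- 1%:M) = 1%:M by rewrite mulmxN mulNmx opprK mulmx1.
by case: (mulmx1_unit h).
Qed.

Lemma col0_row a b c d (X : 'M[F]_(d,b)) (Y : 'M[F]_(d,c)) :
  col_mx (0 : 'M[F]_(a, b+c)) (row_mx X Y) = row_mx (col_mx 0 X) (col_mx 0 Y).
Proof. by rewrite -block_mxEh /block_mx row_mx0. Qed.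

Lemma ct_swap r s k (X : 'M[F]_(r,k)) (Y : 'M[F]_(s,k)) (G : 'M[F]_k) :
  ctrmx G = - G -> Y *m G *m ctrmx X = - ctrmx (X *m G *m ctrmx Y).
Proof. by move=> hG; rewrite !ctrmx_mul ctrmxK hG mulNmx mulmxN opprK mulmxA. Qed.

End Aux.


Section Core.
Variable F : numClosedFieldType.
Variables (k m : nat) (A G11 : 'M[F]_k) (G12 : 'M[F]_(k,m)).
Let G := block_mx G11 G12 (- ctrmx G12) (0 : 'M[F]_m).
Hypothesis hG11 : ctrmx G11 = - G11.
Hypothesis uG : G \in unitmx.
Hypothesis e1 : A *m G11 *m ctrmx A = G11.
Hypothesis e2 : A *m G12 = 0.

Lemma kill r (X : 'M[F]_(r,k)) : X *m G11 = 0 -> X *m G12 = 0 -> X = 0.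
Proof.
move=> h1 h2.
have : row_mx X 0 *m G = 0.
  by rewrite /G mul_row_block h1 h2 !mul0mx !addr0 row_mx0.
move/eqP; rewrite mulmx_free_eq0 ?row_free_unit // row_mx_eq0.
by case/andP=> /eqP.
Qed.

Lemma G11N r (X : 'M[F]_(r,k)) : X *m A = 0 -> X *m G11 = 0.
Proof. by move=> h; rewrite -e1 !mulmxA h !mul0mx. Qed.

Lemma G11N' r (X : 'M[F]_(r,k)) : X *m A = 0 -> G11 *m ctrmx X = 0.
Proof.
move=> h; rewrite -[G11]opprK -hG11 mulNmx -ctrmx_mul (G11N h) ctrmx0 oppr0 //.
Qed.

Lemma kill2 r (X : 'M[F]_(r,k)) : X *m A = 0 -> X *m G12 = 0 -> X = 0.
Proof. by move=> h1 h2; apply: kill => //; apply: G11N. Qed.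

Lemma rankG12 : \rank G12 = m.
Proof.
have h : row_mx 0 (- 1%:M) *m G = row_mx (ctrmx G12) (0 : 'M[F]_m).
  by rewrite /G mul_row_block !mul0mx !add0r mulmx0 mulNmx mul1mx opprK.
rewrite -mxrank_ctrmx -(rank_row_mx0 m) -h mxrankMfree ?row_free_unit //.
have -> : row_mx (0 : 'M[F]_(m,k)) (- 1%:M) = - row_mx 0 1%:M.
  by rewrite -[RHS]scaleN1r scale_row_mx scaler0 scaleN1r.
by rewrite mxrankN' rank_row0_1.
Qed.

Lemma capAG12 : (kermx A :&: kermx G12)%MS = 0 :> 'M_k.
Proof. by apply: kill2; apply/sub_kermxP; [exact: capmxSl | exact: capmxSr]. Qed.

Lemma rank_KG12 : \rank (kermx A *m G12) = \rank (kermx A).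
Proof. by have := mxrank_mul_ker (kermx A) G12; rewrite capAG12 mxrank0 addn0. Qed.

Lemma rankA : (m <= k)%N /\ \rank A = (k - m)%N.
Proof.
have h1 := mulmx0_rank_max e2; rewrite rankG12 in h1.
have h2 := rank_leq_col (kermx A *m G12).
rewrite rank_KG12 mxrank_ker in h2.
have h3 := rank_leq_row A.
split; lia.
Qed.

Lemma N0_ex : exists N0 : 'M[F]_(m,k), N0 *m A = 0 /\ N0 *m G12 = 1%:M.
Proof.
have rf : row_full (kermx A *m G12).
  by rewrite /row_full rank_KG12 mxrank_ker; case: rankA => h ->; apply/eqP; lia.
case/row_fullP: rf => B hB.
exists (B *m kermx A); split; first by rewrite -mulmxA mulmx_ker mulmx0.
by rewrite -mulmxA.
Qed.

Lemma X0_ex p h (Lam : 'M[F]_(p, k+m)) : Lam *m G *m ctrmx Lam = 0 ->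
  \rank Lam = p -> (p + p = k + m)%N -> (h + h + m = k)%N ->
  exists X0 : 'M[F]_(h,k), X0 *m G11 *m ctrmx X0 = 0 /\ X0 *m G12 = 0 /\ row_free X0.
Proof.
move=> hL rL hp hh.
set Lu := lsubmx Lam; set Lv := rsubmx Lam.
have LE : Lam = row_mx Lu Lv by rewrite hsubmxK.
have iso : Lu *m G11 *m ctrmx Lu - Lv *m ctrmx G12 *m ctrmx Lu + Lu *m G12 *m ctrmx Lv = 0.
  move: hL; rewrite LE /G mul_row_block ctrmx_row mul_row_col !mulmx0 addr0 mulmxDl.
  by rewrite mulmxN mulNmx.
set Z := Lu *m G12; set T := kermx Z; set I := T *m Lu.
have hTZ : T *m Lu *m G12 = 0 by rewrite -mulmxA mulmx_ker.
have t2' : ctrmx G12 *m ctrmx Lu *m ctrmx T = 0.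
  by rewrite -!ctrmx_mul mulmxA hTZ ctrmx0.
have isoI : I *m G11 *m ctrmx I = 0.
  have H := congr1 (fun X => T *m X *m ctrmx T) iso; rewrite /= mulmx0 mul0mx in H.
  rewrite !mulmxDr !mulmxDl mulmxN mulNmx in H.
  have e : T *m (Lv *m ctrmx G12 *m ctrmx Lu) *m ctrmx T
          = T *m Lv *m (ctrmx G12 *m ctrmx Lu *m ctrmx T) by rewrite !mulmxA.
  rewrite e t2' mulmx0 oppr0 addr0 in H.
  have e' : T *m (Lu *m G12 *m ctrmx Lv) *m ctrmx T = 0 by rewrite !mulmxA hTZ !mul0mx.
  by move: H; rewrite e' addr0 /I (ctrmx_mul T Lu) !mulmxA.
have IG12 : I *m G12 = 0 by rewrite /I hTZ.
have kLuT : (kermx Lu <= T)%MS.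
  by apply/sub_kermxP; rewrite /Z mulmxA mulmx_ker mul0mx.
have rI : \rank I = (\rank Lu - \rank Z)%N.
  have := mxrank_mul_ker T Lu; rewrite (capmx_idPr kLuT) !mxrank_ker.
  have := mxrankM_maxl Lu G12; have := rank_leq_row Lu; rewrite -/Z.
  rewrite -/I; move=> a b c; lia.
have hE : kermx Lu *m Lv *m ctrmx Z = 0.
  have := congr1 (mulmx (kermx Lu)) iso.
  rewrite mulmx0 !mulmxDr mulmxN !mulmxA mulmx_ker !mul0mx add0r addr0 => /eqP.
  by rewrite oppr_eq0 => /eqP; rewrite /Z ctrmx_mul mulmxA.
have rE : \rank (kermx Lu *m Lv) = \rank (kermx Lu).
  have := mxrank_mul_ker (kermx Lu) Lv.
  suff -> : (kermx Lu :&: kermx Lv)%MS = 0 by rewrite mxrank0 addn0.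
  apply/eqP; rewrite -(mulmx_free_eq0 _ (B := Lam)); last by rewrite /row_free rL.
  rewrite LE mul_mx_row row_mx_eq0; apply/andP; split; apply/eqP/sub_kermxP.
    exact: capmxSl.
  exact: capmxSr.
have := mulmx0_rank_max hE; rewrite rE mxrank_ctrmx mxrank_ker => hb.
have hI : (h <= \rank I)%N.
  have := mxrankM_maxl Lu G12; have := rank_leq_row Lu; rewrite -/Z.
  move=> a b; lia.
set X0 := (pid_mx h : 'M[F]_(h, \rank I)) *m row_base I.
have sX0 : (X0 <= I)%MS by rewrite (submx_trans (submxMl _ _)) // eq_row_base.
case/submxP: sX0 => D XE.
exists X0; split; last split.
- rewrite XE ctrmx_mul.
  have -> : D *m I *m G11 *m (ctrmx I *m ctrmx D) = D *m (I *m G11 *m ctrmx I) *m ctrmx D.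
    by rewrite !mulmxA.
  by rewrite isoI mulmx0 mul0mx.
- by rewrite XE -mulmxA IG12 mulmx0.
- by rewrite /row_free /X0 mxrankMfree ?row_base_free // rank_pid_mx.
Qed.

Lemma half_conj : (2^-1 : F)^* = 2^-1.
Proof. by rewrite fmorphV rmorph_nat. Qed.

Lemma half_add r s (K : 'M[F]_(r,s)) : K - 2^-1 *: K - 2^-1 *: K = 0.
Proof.
have h2 : (2^-1 : F) + 2^-1 = 1 by field.
by rewrite -addrA -opprD -scalerDl h2 scale1r subrr.
Qed.

Lemma R_ex h (X0 : 'M[F]_(h,k)) (N0 : 'M[F]_(m,k)) :
  X0 *m G11 *m ctrmx X0 = 0 -> X0 *m G12 = 0 -> row_free X0 ->
  N0 *m A = 0 -> N0 *m G12 = 1%:M ->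
  exists R : 'M[F]_(h+h, k), R *m G11 *m ctrmx R = Jmx F h /\ R *m G12 = 0.
Proof.
move=> hX0 hX0G rfX0 hN0A hN0G.
have rf : row_free (X0 *m G11).
  rewrite /row_free; have := mxrank_mul_ker X0 G11.
  suff -> : (X0 :&: kermx G11)%MS = 0.
    by rewrite mxrank0 addn0 => ->.
  apply: kill; first by apply/sub_kermxP; exact: capmxSr.
  by case/submxP: (capmxSl X0 (kermx G11)) => D ->; rewrite -mulmxA hX0G mulmx0.
set Y := ctrmx (pinvmx (X0 *m G11)).
have hY : X0 *m G11 *m ctrmx Y = 1%:M by rewrite ctrmxK mulmxVp.
set Y2 := Y - Y *m G12 *m N0.
have hY2a : Y2 *m G12 = 0 by rewrite mulmxBl -(mulmxA (Y *m G12)) hN0G mulmx1 subrr.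
have hY2b : X0 *m G11 *m ctrmx Y2 = 1%:M.
  rewrite ctrmxB mulmxBr hY (ctrmx_mul (Y *m G12)).
  by rewrite mulmxA -(mulmxA X0) (G11N' hN0A) mulmx0 mul0mx subr0.
have hY2c : Y2 *m G11 *m ctrmx X0 = - 1%:M by rewrite (ct_swap _ _ hG11) hY2b ctrmx1.
set Km := Y2 *m G11 *m ctrmx Y2.
have hK : ctrmx Km = - Km.
  have e := ct_swap Y2 Y2 hG11; rewrite -/Km in e.
  by rewrite {1}e ctrmxN ctrmxK.
set Xi := Y2 - (2^-1 *: Km) *m X0.
have hXiG : Xi *m G12 = 0 by rewrite mulmxBl hY2a -mulmxA hX0G mulmx0 subrr.
have hXi1 : X0 *m G11 *m ctrmx Xi = 1%:M.
  rewrite ctrmxB mulmxBr hY2b ctrmx_mul mulmxA hX0 mul0mx subr0 //.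
have hXi2 : Xi *m G11 *m ctrmx X0 = - 1%:M by rewrite (ct_swap _ _ hG11) hXi1 ctrmx1.
have hXi3 : Xi *m G11 *m ctrmx Xi = 0.
  have eXi : ctrmx Xi = ctrmx Y2 + 2^-1 *: (ctrmx X0 *m Km).
    rewrite ctrmxB ctrmx_mul ctrmxZ half_conj hK.
    by rewrite scalerN mulmxN opprK; congr (_ + _); symmetry; exact: scalemxAr.
  rewrite eXi mulmxDr -scalemxAr mulmxA hXi2 mulNmx mul1mx.
  have e2' : Km *m X0 *m G11 *m ctrmx Y2 = Km by rewrite -[RHS]mulmx1 -hY2b !mulmxA.
  rewrite {1}/Xi mulmxBl mulmxBl -/Km -!scalemxAl e2' scalerN.
  exact: half_add.
exists (col_mx X0 Xi); split; last by rewrite mul_col_mx hX0G hXiG col_mx0.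
by rewrite ctrmx_col !mul_col_mx !mul_mx_row hX0 hXi1 hXi2 hXi3.
Qed.

Lemma Sh_ex h (R : 'M[F]_(h+h,k)) : R *m G11 *m ctrmx R = Jmx F h -> R *m G12 = 0 ->
  (h + h + m = k)%N ->
  exists Sh : 'M[F]_(h+h), symplectic Sh /\ A *m G11 *m ctrmx R = G11 *m ctrmx R *m Sh.
Proof.
move=> hRJ hRG hh.
set J := Jmx F h in hRJ *.
have JJ : J *m J = - 1%:M by rewrite /J Jmx_sq.
have uJ : J \in unitmx.
  by case: (@mulmx1_unit _ _ J (- J)) => //; rewrite mulmxN JJ opprK.
have rR : \rank R = (h + h)%N.
  apply/eqP; rewrite eqn_leq rank_leq_row /=.
  rewrite -{1}(mxrank_unit uJ) -hRJ.
  exact: leq_trans (mxrankM_maxl _ _) (mxrankM_maxl _ _).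
have sRS : (R <= kermx G12)%MS by apply/sub_kermxP.
have rS : \rank (kermx G12) = (h + h)%N by rewrite mxrank_ker rankG12; lia.
have sSR : (kermx G12 <= R)%MS by rewrite -(mxrank_leqif_sup sRS).2 rR rS eqxx.
have sRA : (R *m A <= R)%MS.
  by apply: submx_trans sSR; apply/sub_kermxP; rewrite -mulmxA e2 mulmx0.
case/submxP: sRA => D hD.
have hDJ : D *m J *m ctrmx D = J.
  have e : R *m G11 *m ctrmx R = R *m A *m G11 *m ctrmx (R *m A).
    by rewrite -{1}e1 ctrmx_mul !mulmxA.
  rewrite hD ctrmx_mul hRJ in e.
  by rewrite {2}e -hRJ !mulmxA.
set Dh := ctrmx D.
have hinv : D *m (- (J *m Dh *m J)) = 1%:M.
  by rewrite mulmxN !mulmxA hDJ JJ opprK.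
have h2 := mulmx1C hinv.
have hDh : Dh *m J *m D = J.
  have e : J *m (- (J *m Dh *m J) *m D) = J by rewrite h2 mulmx1.
  by move: e; rewrite mulNmx mulmxN !mulmxA JJ !mulNmx opprK mul1mx.
have uDh : Dh \in unitmx.
  case: (@mulmx1_unit _ _ Dh (J *m D *m - J)) => //.
  by rewrite !mulmxN !mulmxA hDh JJ opprK.
exists (invmx Dh); split.
  rewrite /symplectic -/J.
  have e : D *m ctrmx (invmx Dh) = 1%:M.
    by rewrite -{1}(ctrmxK D) -/Dh -ctrmx_mul mulVmx // ctrmx1.
  rewrite -{1}hDh !mulmxA mulVmx // mul1mx -mulmxA e mulmx1 //.
have e : G11 *m ctrmx R = A *m G11 *m ctrmx R *m Dh.
  have e' : ctrmx R *m Dh = ctrmx A *m ctrmx R by rewrite /Dh -ctrmx_mul -hD ctrmx_mul.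
  by rewrite -(mulmxA _ (ctrmx R)) e' -{1}e1 !mulmxA.
by rewrite e -(mulmxA _ Dh) mulmxV // mulmx1.
Qed.

Lemma core_blocks p h (Lam : 'M[F]_(p, k+m)) : Lam *m G *m ctrmx Lam = 0 ->
  \rank Lam = p -> (p + p = k + m)%N -> (h + h + m = k)%N ->
  exists (O0 Oi : 'M[F]_(k+m, m)) (O1 : 'M[F]_(k+m, h+h)) (Sh : 'M[F]_(h+h)),
   symplectic Sh /\
   ctrmx (row_mx O1 (row_mx O0 Oi)) *m G *m row_mx O1 (row_mx O0 Oi)
     = block_mx (Jmx F h) 0 0 (Jmx F m) /\
   block_mx A 0 0 1%:M *m G *m O0 = 0 /\
   block_mx 1%:M 0 0 (0 : 'M_m) *m G *m Oi = 0 /\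
   block_mx A 0 0 1%:M *m G *m O1 = block_mx 1%:M 0 0 (0 : 'M_m) *m G *m O1 *m Sh.
Proof.
move=> hL rL hp hh.
have [N0 [hN0A hN0G]] := N0_ex.
have [X0 [hX1 [hX2 hX3]]] := X0_ex hL rL hp hh.
have [R [hRJ hRG]] := R_ex hX1 hX2 hX3 hN0A hN0G.
have [Sh [sSh hSh]] := Sh_ex hRJ hRG hh.
set O0 := col_mx (0 : 'M[F]_(k,m)) (1%:M : 'M_m).
set Oi := col_mx (- ctrmx N0) (0 : 'M[F]_(m,m)).
set O1 := col_mx (ctrmx R) (0 : 'M[F]_(m,h+h)).
have GO0 : G *m O0 = col_mx G12 0.
  by rewrite /G /O0 mul_block_col ?mulmx0 ?mul0mx ?mulmx1 ?add0r ?addr0.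
have GOi : G *m Oi = col_mx 0 1%:M.
  rewrite /G /Oi mul_block_col ?mulmx0 ?mul0mx ?addr0 mulmxN (G11N' hN0A) oppr0.
  by rewrite mulNmx mulmxN opprK -ctrmx_mul hN0G ctrmx1.
have GO1 : G *m O1 = col_mx (G11 *m ctrmx R) 0.
  by rewrite /G /O1 mul_block_col ?mulmx0 ?mul0mx ?addr0 mulNmx -ctrmx_mul hRG ctrmx0 oppr0.
exists O0, Oi, O1, Sh; split=> //; split; last split; last split.
- rewrite -mulmxA !mul_mx_row GO0 GOi GO1 !ctrmx_row !mul_col_mx.
  rewrite /O0 /Oi /O1 !ctrmx_col !ctrmxK ctrmxN ctrmxK !ctrmx0 ctrmx1 !mul_row_col.
  rewrite ?mulmx0 ?mul0mx ?mul1mx ?addr0 ?add0r mulmxA hRJ mulNmx (mulmxA N0) (G11N hN0A).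
  rewrite mul0mx oppr0 hRG mulNmx hN0G !col_mx0.
  set Jh := Jmx F h.
  rewrite [RHS]block_mxEh /Jmx block_mxEh; congr row_mx.
  transitivity (block_mx (0 : 'M[F]_(h+h, m)) (0 : 'M[F]_(h+h, m))
     (col_mx (0 : 'M[F]_(m, m)) (- 1%:M)) (col_mx (1%:M : 'M[F]_m) (0 : 'M[F]_(m, m)))).
    by rewrite block_mxEh.
  by rewrite /block_mx row_mx0.
- by rewrite -mulmxA GO0 mul_block_col e2 ?mul0mx ?mulmx0 ?addr0 col_mx0.
- by rewrite -mulmxA GOi mul_block_col ?mul0mx ?mulmx0 ?addr0 col_mx0.
- rewrite -!mulmxA GO1 (mulmxA _ _ Sh) GO1 !mul_block_col !mul_col_mx ?mulmx0 ?mul0mx ?addr0 ?mulmx1 ?mul1mx.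
  by rewrite !mul_row_col ?mul0mx ?mulmx0 ?addr0 mul1mx mulmxA hSh.
Qed.

End Core.


Lemma rank_unitl (F : fieldType) n r (P : 'M[F]_n) (X : 'M[F]_(n,r)) :
  P \in unitmx -> \rank (P *m X) = \rank X.
Proof.
move=> uP; apply/eqP; rewrite eqn_leq mxrankM_maxr /=.
by rewrite -{1}(mulKmx uP X) mxrankM_maxr.
Qed.

Lemma main_gen (F : numClosedFieldType) N (M L Jf : 'M[F]_N) k m (e : (k + m)%N = N)
  (A : 'M[F]_k) (P Q : 'M[F]_N) p (X : 'M[F]_(N,p)) :
  ctrmx Jf = - Jf -> Jf *m Jf = - 1%:M -> M *m Jf *m ctrmx M = L *m Jf *m ctrmx L ->
  P \in unitmx -> Q \in unitmx ->
  P *m M *m Q = castmx (e,e) (block_mx A 0 0 1%:M) ->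
  P *m L *m Q = castmx (e,e) (block_mx 1%:M 0 0 (0 : 'M_m)) ->
  ctrmx X *m Jf *m X = 0 -> \rank X = p -> (p + p = N)%N ->
  (m <= k)%N /\ \rank M = k /\ \rank L = k /\
  forall h l, (h + h + m = k)%N -> l = m ->
   exists (U0 Ui : 'M[F]_(N, l)) (U1 : 'M[F]_(N, h+h)) (Sh : 'M[F]_(h+h)),
    symplectic Sh /\
    ctrmx (row_mx U1 (row_mx U0 Ui)) *m Jf *m row_mx U1 (row_mx U0 Ui)
      = block_mx (Jmx F h) 0 0 (Jmx F l) /\
    M *m U0 = 0 /\ L *m Ui = 0 /\ M *m U1 = L *m U1 *m Sh.
Proof.
case: N / e M L Jf P Q X => M L Jf P Q X hJ JJ hs uP uQ hPM hPL hX rX hp.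
rewrite castmx_id in hPM; rewrite castmx_id in hPL.
set DM := block_mx A 0 0 1%:M in hPM *.
set DL := block_mx 1%:M 0 0 (0 : 'M[F]_m) in hPL *.
set W := invmx Q.
have uW : W \in unitmx by rewrite /W unitmx_inv.
have hM : P *m M = DM *m W by rewrite -hPM -mulmxA mulmxV // mulmx1.
have hL : P *m L = DL *m W by rewrite -hPL -mulmxA mulmxV // mulmx1.
set G := W *m Jf *m ctrmx W.
have uJ : Jf \in unitmx.
  by case: (@mulmx1_unit _ _ Jf (- Jf)) => //; rewrite mulmxN JJ opprK.
have uG : G \in unitmx by rewrite /G !unitmx_mul uW uJ ctrmx_unit.
have hG : ctrmx G = - G by rewrite /G !ctrmx_mul ctrmxK hJ mulNmx mulmxN mulmxA.
have hyp : DM *m G *m ctrmx DM = DL *m G *m ctrmx DL.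
  have := congr1 (fun Y => P *m Y *m ctrmx P) hs; rewrite /= !mulmxA hM hL.
  rewrite -!mulmxA -!ctrmx_mul !mulmxA hM hL /G ctrmx_mul !mulmxA.
  done.
set G11 := ulsubmx G; set G12 := ursubmx G; set G21 := dlsubmx G; set G22 := drsubmx G.
have GE : G = block_mx G11 G12 G21 G22 by rewrite submxK.
have := hG; rewrite GE ctrmx_block -[RHS]scaleN1r scale_block_mx !scaleN1r.
case/eq_block_mx => hG11 hG21 _ _.
have := hyp; rewrite GE /DM /DL !ctrmx_block !mulmx_block ?ctrmx0 ?ctrmx1.
rewrite ?mulmx0 ?mul0mx ?mulmx1 ?mul1mx ?addr0 ?add0r.
case/eq_block_mx => e1 e2 _ e4.
have h21 : G21 = - ctrmx G12 by rewrite -[G21]ctrmxK hG21 ctrmxN.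
have GE' : G = block_mx G11 G12 (- ctrmx G12) 0 by rewrite GE h21 e4.
have uG' : block_mx G11 G12 (- ctrmx G12) (0 : 'M[F]_m) \in unitmx by rewrite -GE'.
have [mk rA] := rankA uG' e1 e2.
have QW : Q *m W = 1%:M by rewrite mulmxV.
have WQ : ctrmx W *m ctrmx Q = 1%:M by rewrite -ctrmx_mul QW ctrmx1.
set Lam := ctrmx X *m ctrmx Jf *m Q.
have LG : Lam *m G = ctrmx X *m ctrmx Jf *m Jf *m ctrmx W.
  by rewrite /Lam /G !mulmxA -(mulmxA _ Q W) QW mulmx1.
have hLam : Lam *m G *m ctrmx Lam = 0.
  rewrite LG /Lam !ctrmx_mul !ctrmxK !mulmxA -(mulmxA _ (ctrmx W) (ctrmx Q)) WQ mulmx1.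
  rewrite hJ mulmxN !mulNmx -(mulmxA _ Jf Jf) JJ mulmxN mulmx1 mulNmx opprK.
  by rewrite hX.
have rLam : \rank Lam = p.
  by rewrite /Lam -mulmxA mxrankMfree ?mxrank_ctrmx // row_free_unit unitmx_mul ctrmx_unit.
rewrite GE' in hLam.
split=> //.
have rDM : \rank DM = k by rewrite /DM rank_diag_block_mx mxrank1 rA; lia.
have rDL : \rank DL = k by rewrite /DL rank_diag_block_mx mxrank1 mxrank0 addn0.
split; first by rewrite -(rank_unitl M uP) hM mxrankMfree ?row_free_unit.
split; first by rewrite -(rank_unitl L uP) hL mxrankMfree ?row_free_unit.
move=> h l hh ->.
have [O0 [Oi [O1 [Sh [sSh [hB [h0 [hi h1]]]]]]]] := core_blocks hG11 uG' e1 e2 hLam rLam hp hh.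
rewrite -GE' in hB h0 hi h1.
rewrite -/DM in h0 h1; rewrite -/DL in hi h1.
set T := Jf *m ctrmx W.
have TT : ctrmx T *m Jf *m T = G.
  rewrite /T ctrmx_mul ctrmxK hJ /G !mulmxA -(mulmxA _ Jf Jf) JJ.
  by rewrite mulmxN mulmxN mulmx1 opprK.
have MT : M *m T = invmx P *m DM *m G.
  by rewrite -[M](mulKmx uP) hM /T /G !mulmxA.
have LT : L *m T = invmx P *m DL *m G.
  by rewrite -[L](mulKmx uP) hL /T /G !mulmxA.
exists (T *m O0), (T *m Oi), (T *m O1), Sh; split=> //; split; last split; last split.
- rewrite -!mul_mx_row ctrmx_mul.
  have -> : forall Z : 'M[F]_(k+m, h + h + (m + m)),
      ctrmx Z *m ctrmx T *m Jf *m (T *m Z) = ctrmx Z *m (ctrmx T *m Jf *m T) *m Z.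
    by move=> Z; rewrite !mulmxA.
  by rewrite TT.
- have -> : M *m (T *m O0) = invmx P *m (DM *m G *m O0) by rewrite mulmxA MT !mulmxA.
  by rewrite h0 mulmx0.
- have -> : L *m (T *m Oi) = invmx P *m (DL *m G *m Oi) by rewrite mulmxA LT !mulmxA.
  by rewrite hi mulmx0.
- have -> : M *m (T *m O1) = invmx P *m (DM *m G *m O1) by rewrite mulmxA MT !mulmxA.
  have -> : L *m (T *m O1) = invmx P *m (DL *m G *m O1) by rewrite mulmxA LT !mulmxA.
  by rewrite h1 !mulmxA.
Qed.

Local Open Scope complex_scope.
Unset Implicit Arguments.

Theorem theorem2p3 (R : realType) (n : nat) (M L : 'M[R[i]]_(n + n)) :
  regular_pair M L -> symplectic_pair M L -> ind_inf_le M L 1 ->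
  exists nh : nat, (nh <= n)%N /\
    \rank M = (n + nh)%N /\ \rank L = (n + nh)%N /\
    exists (U0 Uinf : 'M[R[i]]_(n + n, n - nh))
           (U1 : 'M[R[i]]_(n + n, nh + nh)) (Sh : 'M[R[i]]_(nh + nh)),
      symplectic Sh /\
      ctrmx (row_mx U1 (row_mx U0 Uinf)) *m Jmx _ n *m row_mx U1 (row_mx U0 Uinf)
        = block_mx (Jmx _ nh) 0 0 (Jmx _ (n - nh)) /\
      M *m U0 = 0 /\ L *m Uinf = 0 /\ M *m U1 = L *m U1 *m Sh.
Proof.
move=> _ hs [k [m [e [J [Nil [[_ [_ [P [Q [uP [uQ [hPM hPL]]]]]]] hN]]]]]].
rewrite expr1 in hN; rewrite hN in hPL.
set X := col_mx (1%:M : 'M[R[i]]_n) (0 : 'M[R[i]]_(n,n)).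
have hX : ctrmx X *m Jmx _ n *m X = 0.
  rewrite /X ctrmx_col ctrmx1 ctrmx0 /Jmx mul_row_block mul_row_col.
  by rewrite ?mulmx0 ?mul0mx ?mulmx1 ?mul1mx ?add0r ?addr0 ?mulmx0 ?mul0mx ?addr0 ?add0r.
have rX : \rank X = n by rewrite /X rank_col_1_0.
have [mk [rM [rL H]]] := main_gen (Jmx_ct _ n) (Jmx_sq _ n) hs uP uQ hPM hPL hX rX (erefl _).
have mn : (m <= n)%N by lia.
exists (n - m)%N; split; first by lia.
split; first by rewrite rM; lia.
split; first by rewrite rL; lia.
apply: H; lia.
Qed.
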